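(* Let $r\ge 1$ and $K\ge1$ be integers, $\beta_1,\beta_2>0$ and $\theta_1,\theta_2>0$. Let $\zeta=(1,0,0)$, $\eta=(0,0,1)$, $v=(0,0,1)$, $v'=(0,1,0)$, and for $i=1,\dots,r$ let $k_i=2^{i-1}K\zeta\in\mathbb{Z}^3$ and $k_i'=k_i+\eta$. Define the vector fields on $\mathbb{R}^3$ \[ u_0(x)=r^{-\beta_1}\sum_{i=1}^r|k_i|^{\theta_1}v\cos(k_i\cdot x),\qquad b_0(x)=r^{-\beta_2}\sum_{i=1}^r|k_i'|^{\theta_2}v'\cos(k_i'\cdot x). \] Then \[ \|u_0\|_{\dot B^{-\theta_1}_{\infty,\infty}}\lesssim r^{-\beta_1},\qquad \|b_0\|_{\dot B^{-\theta_2}_{\infty,\infty}}\lesssim r^{-\beta_2}, \] with implicit constants independent of $r$ and $K$.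
   Context: For $s>0$, $\|f\|_{\dot B^{-s}_{\infty,\infty}}=\sup_{t>0}t^{\frac{s}{2\alpha}}\|e^{-t(-\Delta)^{\alpha}}f\|_{L^\infty}$ for a fixed $\alpha>0$ (different $\alpha$ give equivalent norms), where $e^{-t(-\Delta)^\alpha}$ is the fractional heat semigroup (Fourier multiplier $e^{-t|\xi|^{2\alpha}}$). *)

(* Defs.v *)
From HB Require Import structures.
From mathcomp Require Import all_boot all_order all_algebra.
From mathcomp Require Import all_classical all_reals all_analysis.
Set Implicit Arguments. Unset Strict Implicit. Unset Printing Implicit Defensive.
Import Order.TTheory GRing.Theory Num.Theory.
Local Open Scope ring_scope.
Local Open Scope classical_set_scope.

Section Defs.
Variable R : realType.

Definition vec3 := 'rV[R]_3.

Definition evec (j : nat) : vec3 := \row_(l < 3) ((val l == j)%:R).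

Definition dot3 (k x : vec3) : R := \sum_(i < 3) k 0 i * x 0 i.

Definition enorm3 (k : vec3) : R := Num.sqrt (\sum_(i < 3) k 0 i ^+ 2).

Definition trig_field (s : seq (vec3 * vec3)) (x : vec3) : vec3 :=
  \sum_(p <- s) (cos (dot3 p.2 x) *: p.1).

(* fractional heat semigroup e^{-t(-Delta)^alpha}: Fourier multiplier
   e^{-t|xi|^{2 alpha}}, acting on cos(k.x) by multiplication by
   e^{-t|k|^{2 alpha}} *)
Definition frac_heat (alpha t : R) (s : seq (vec3 * vec3)) :=
  [seq (expR (- (t * enorm3 p.2 `^ (2 * alpha))) *: p.1, p.2) | p <- s].

Definition Linf_norm (s : seq (vec3 * vec3)) : \bar R :=
  ereal_sup [set (enorm3 (trig_field s x))%:E | x in [set: vec3]].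

(* ||f||_{\dot B^{-s}_{oo,oo}} = sup_{t>0} t^{s/(2 alpha)} ||e^{-t(-Delta)^alpha} f||_oo *)
Definition besov_neg_norm (alpha s : R) (f : seq (vec3 * vec3)) : \bar R :=
  ereal_sup [set ((t `^ (s / (2 * alpha)))%:E * Linf_norm (frac_heat alpha t f))%E
            | t in [set t : R | 0 < t]].

Definition zeta : vec3 := evec 0.
Definition eta_ : vec3 := evec 2.
Definition vv : vec3 := evec 2.
Definition vv' : vec3 := evec 1.

Definition kfreq (K i : nat) : vec3 := (2 ^ i.-1 * K)%:R *: zeta.
Definition kfreq' (K i : nat) : vec3 := kfreq K i + eta_.

Definition u0 (r K : nat) (beta theta : R) : seq (vec3 * vec3) :=
  [seq (((r%:R) `^ (- beta) * enorm3 (kfreq K i) `^ theta) *: vv, kfreq K i)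
  | i <- iota 1 r].

Definition b0 (r K : nat) (beta theta : R) : seq (vec3 * vec3) :=
  [seq (((r%:R) `^ (- beta) * enorm3 (kfreq' K i) `^ theta) *: vv', kfreq' K i)
  | i <- iota 1 r].

End Defs.

(* Main.v *)
Require Import Defs.
From HB Require Import structures.
From mathcomp Require Import all_boot all_order all_algebra.
From mathcomp Require Import all_classical all_reals all_analysis.
From mathcomp Require Import ring lra.
Import Order.TTheory GRing.Theory Num.Theory.
Set Implicit Arguments. Unset Strict Implicit. Unset Printing Implicit Defensive.
Local Open Scope ring_scope.
Definition phiT (R : realType) (x : R) : R := if x <= 1 then x else 2 - x^-1.
Definition hT (R : realType) (x : R) : R := if x <= 1 then x else x^-1.

Lemma phiT_mono (R : realType) (x y : R) : 0 < x -> x <= y -> phiT x <= phiT y.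
Proof.
move=> x0 xy; rewrite /phiT.
have y0 : 0 < y by apply: lt_le_trans xy.
case: ifP => hx; case: ifP => hy //.
- have hy' : 1 < y by rewrite ltNge hy.
  have : y^-1 < 1 by rewrite invf_lt1.
  lra.
- have hx' : 1 < x by rewrite ltNge hx.
  have := lt_le_trans hx' xy; lra.
- rewrite lerD2l lerN2 lef_pV2 ?posrE //.
Qed.

Lemma phiT_bnd (R : realType) (y : R) : 0 < y -> 0 <= phiT y <= 2.
Proof.
move=> y0; rewrite /phiT; case: ifP => hy.
- apply/andP; split; lra.
- have hy' : 1 < y by rewrite ltNge hy.
  have : y^-1 < 1 by rewrite invf_lt1.
  have : 0 < y^-1 by rewrite invr_gt0.
  move=> *; apply/andP; split; lra.
Qed.

Lemma hT_step (R : realType) (rho x y : R) : 1 < rho -> 0 < x -> rho * x <= y ->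
  hT x <= rho / (rho - 1) * (phiT y - phiT x).
Proof.
move=> r1 x0 xy.
have r10 : 0 < rho - 1 by lra.
have r0 : 0 < rho by lra.
have A0 : 0 < rho / (rho - 1) by apply: divr_gt0.
apply: (@le_trans _ _ (rho / (rho - 1) * (phiT (rho * x) - phiT x))); last first.
  apply: ler_wpM2l; first exact: ltW.
  rewrite lerD2r; apply: phiT_mono => //; exact: mulr_gt0.
have rx0 : 0 < rho * x by exact: mulr_gt0.
have xrx : x < rho * x by rewrite -{1}(mul1r x) ltr_pM2r.
rewrite /phiT /hT.
case: (lerP (rho * x) 1) => h1.
- have hx : x <= 1 by lra.
  rewrite hx.
  have -> : rho / (rho - 1) * (rho * x - x) = rho * x.
    by field; rewrite subr_eq0 gt_eqF.
  lra.
- case: (lerP x 1) => hx.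
  + set D := (rho * x - 1) * (1 - x) / (rho * x).
    have D0 : 0 <= D by rewrite /D divr_ge0 ?mulr_ge0 //; lra.
    have -> : 2 - (rho * x)^-1 - x = (rho - 1) / rho + D.
      rewrite /D; field; rewrite ?gt_eqF //.
    rewrite mulrDr.
    have -> : rho / (rho - 1) * ((rho - 1) / rho) = 1.
      by field; rewrite ?gt_eqF.
    have : 0 <= rho / (rho - 1) * D by rewrite mulr_ge0 // ltW.
    lra.
  + have -> : rho / (rho - 1) * (2 - (rho * x)^-1 - (2 - x^-1)) = x^-1.
      by field; rewrite ?gt_eqF.
    done.
Qed.

Lemma tele_sum (R : realType) (rho : R) (x : nat -> R) (a n : nat) :
  1 < rho -> (forall i, (a <= i)%N -> 0 < x i /\ rho * x i <= x i.+1) ->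
  \sum_(i <- iota a n) hT (x i) <= rho / (rho - 1) * (phiT (x (a + n)%N) - phiT (x a)).
Proof.
move=> r1; elim: n a => [|n IH] a H.
  by rewrite big_nil addn0 subrr mulr0.
rewrite /= big_cons.
have [x0 xs] := H a (leqnn a).
have := hT_step r1 x0 xs.
have := IH a.+1 (fun i hi => H i (ltnW hi)).
rewrite addSnnS => h1 h2.
have -> : phiT (x (a + n.+1)%N) - phiT (x a) =
  (phiT (x (a + n.+1)%N) - phiT (x a.+1)) + (phiT (x a.+1) - phiT (x a)) by ring.
rewrite mulrDr addrC; exact: lerD.
Qed.
Lemma g_bound (R : realType) (c : R) : 0 < c ->
  exists M : R, 1 <= M /\ forall s : R, 0 < s ->
    s `^ c * expR (- s) <= M / s `^ c.
Proof.
move=> c0.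
set N := Num.truncn (2 * c).
exists (1 + (N.+1)`!%:R); split.
  by rewrite lerDl ler0n.
move=> s s0.
have sc0 : 0 < s `^ c by apply: powR_gt0.
rewrite ler_pdivlMr //.
have -> : s `^ c * expR (- s) * s `^ c = s `^ (c + c) * expR (- s).
  by rewrite powRD ?(gt_eqF s0) ?implybT //; ring.
have e0 : 0 < expR (- s) by apply: expR_gt0.
have es : expR (- s) * expR s = 1 by rewrite -expRD addNr expR0.
have hN : s `^ (c + c) <= 1 + (N.+1)`!%:R * expR s.
  have f0 : 0 < (N.+1)`!%:R :> R by rewrite ltr0n fact_gt0.
  case: (lerP s 1) => hs.
  - apply: (@le_trans _ _ 1); last first.
      by rewrite lerDl mulr_ge0 // ?ltW // expR_ge0.
    rewrite -(powRr0 s); apply: ger_powR; first by rewrite s0 hs.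
    lra.
  - apply: (@le_trans _ _ (s ^+ N.+1)).
      rewrite -powR_mulrn; last exact: ltW s0.
      apply: (@ler_powR R s (ltW hs)).
      have := truncnS_gt (2 * c); rewrite -/N; lra.
    have := expR_ge1Dxn N (ltW s0).
    move=> h.
    have h' : s ^+ N.+1 / (N.+1)`!%:R <= expR s.
      apply: le_trans h; rewrite lerDr //.
    rewrite ler_pdivrMr // in h'.
    apply: (@le_trans _ _ ((N.+1)`!%:R * expR s)); last by rewrite lerDr.
    by rewrite mulrC.
apply: (@le_trans _ _ ((1 + (N.+1)`!%:R * expR s) * expR (- s))).
  by apply: ler_wpM2r => //; apply: ltW.
rewrite mulrDl mul1r -mulrA (mulrC (expR s)) es mulr1 lerD2r.
by rewrite -expR0 ler_expR; lra.
Qed.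

Lemma sum_bound (R : realType) (alpha theta : R) : 0 < alpha -> 0 < theta ->
  exists C0 : R, 0 < C0 /\ forall (m : nat -> R) (t : R) (r : nat), 0 < t ->
    (forall i, (1 <= i)%N -> 0 < m i /\ 2 * m i ^+ 2 <= m i.+1 ^+ 2) ->
    t `^ (theta / (2 * alpha)) *
      \sum_(i <- iota 1 r) expR (- (t * m i `^ (2 * alpha))) * m i `^ theta <= C0.
Proof.
move=> a0 th0.
set c := theta / (2 * alpha).
have c0 : 0 < c by rewrite /c divr_gt0 // mulr_gt0.
have [M [M1 HM]] := g_bound c0.
set rho := 2 `^ (alpha * c).
have r1 : 1 < rho.
  have := @gt0_ltr_powR R (alpha * c) (mulr_gt0 a0 c0) 1 2.
  rewrite powR1 => -> //; rewrite ?nnegrE //; lra.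
set A := rho / (rho - 1).
have A0 : 0 < A by rewrite /A divr_gt0 //; lra.
exists (M * (A * 2)); split; first by apply: mulr_gt0; [lra | apply: mulr_gt0 => //; lra].
move=> m t r t0 Hm.
set s := fun i => t * m i `^ (2 * alpha).
set x := fun i => s i `^ c.
have -> : t `^ c * \sum_(i <- iota 1 r) expR (- (t * m i `^ (2 * alpha))) * m i `^ theta
    = \sum_(i <- iota 1 r) x i * expR (- s i).
  rewrite mulr_sumr; apply: eq_bigr => i _.
  rewrite /x /s powRM ?powR_ge0 ?(ltW t0) // -powRrM.
  have -> : 2 * alpha * c = theta by rewrite /c; field; rewrite gt_eqF.
  ring.
have s0 : forall i, (1 <= i)%N -> 0 < s i.
  move=> i hi; rewrite /s mulr_gt0 // powR_gt0 //; exact: (Hm i hi).1.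
have x0 : forall i, (1 <= i)%N -> 0 < x i.
  by move=> i hi; rewrite /x powR_gt0 // s0.
apply: (@le_trans _ _ (\sum_(i <- iota 1 r) M * hT (x i))).
  rewrite [X in X <= _]big_seq [X in _ <= X]big_seq; apply: ler_sum => i.
  rewrite mem_iota => /andP[hi _].
  have e1 : expR (- s i) <= 1 by rewrite -expR0 ler_expR; have := s0 i hi; lra.
  have e0 : 0 < expR (- s i) := expR_gt0 _.
  have := x0 i hi; rewrite /hT; case: ifP => hx xp.
  - apply: (@le_trans _ _ (x i)); first by rewrite ler_piMr // ltW.
    by rewrite ler_peMl // ltW.
  - exact: (HM _ (s0 i hi)).
rewrite -mulr_sumr; apply: ler_wpM2l; first lra.
have ratio : forall i, (1 <= i)%N -> 0 < x i /\ rho * x i <= x i.+1.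
  move=> i hi; split; first exact: x0.
  have [mi0 mi2] := Hm i hi.
  have mi1 : 0 < m i.+1 by have [] := Hm i.+1 (leqW hi).
  have hs : 2 `^ alpha * s i <= s i.+1.
    rewrite /s mulrCA ler_pM2l //.
    have E : forall y : R, 0 <= y -> y `^ (2 * alpha) = (y ^+ 2) `^ alpha.
      by move=> y y0; rewrite powRrM (powR_mulrn 2 y0).
    rewrite (E _ (ltW mi0)) (E _ (ltW mi1)) -powRM ?sqr_ge0 //.
    apply: ge0_ler_powR; rewrite ?nnegrE ?mulr_ge0 ?sqr_ge0 //; lra.
  rewrite /x /rho powRrM -powRM; [| exact: powR_ge0 | exact: ltW (s0 _ hi)].
  apply: ge0_ler_powR; [exact: ltW c0 | | | exact: hs].
  - by rewrite nnegrE; apply: mulr_ge0; [exact: powR_ge0 | exact: ltW (s0 _ hi)].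
  - by rewrite nnegrE; exact: ltW (s0 _ (leqW hi)).
have := @tele_sum R rho x 1%N r r1 ratio.
have := phiT_bnd (x0 _ (leq_addr r 1)).
have := phiT_bnd (x0 1%N (leqnn 1)).
move=> /andP[p1 p2] /andP[p3 p4] h.
apply: (le_trans h).
rewrite -/A; apply: ler_wpM2l; first exact: ltW A0.
by have := lerB p4 p1; rewrite subr0.

Qed.
Lemma enorm3_Ze (R : realType) (a : R) (j : nat) : (j < 3)%N ->
  enorm3 (a *: evec R j) = `|a|.
Proof.
move=> hj; rewrite /enorm3 !big_ord_recr big_ord0 /= !mxE /=.
rewrite -sqrtr_sqr; congr Num.sqrt.
by case: j hj => [|[|[|]]] //= _; rewrite !(mulr1, mulr0) expr0n /=; ring.
Qed.

Lemma trig_field_Ze (R : realType) (g : nat -> R) (k : nat -> vec3 R) j s x :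
  trig_field [seq (g i *: evec R j, k i) | i <- s] x =
  (\sum_(i <- s) cos (dot3 (k i) x) * g i) *: evec R j.
Proof.
rewrite /trig_field big_map scaler_suml; apply: eq_bigr => i _ /=.
by rewrite scalerA.
Qed.

Lemma frac_heat_Ze (R : realType) (alpha t : R) (g : nat -> R) (k : nat -> vec3 R) j s :
  frac_heat alpha t [seq (g i *: evec R j, k i) | i <- s] =
  [seq ((expR (- (t * enorm3 (k i) `^ (2 * alpha))) * g i) *: evec R j, k i) | i <- s].
Proof.
by rewrite /frac_heat -map_comp; apply: eq_map => i /=; rewrite scalerA.
Qed.

Lemma Linf_Ze (R : realType) (g : nat -> R) (k : nat -> vec3 R) j s :
  (j < 3)%N ->
  (Linf_norm [seq (g i *: evec R j, k i) | i <- s] <= (\sum_(i <- s) `|g i|)%:E)%E.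
Proof.
move=> hj; apply: ge_ereal_sup => _ [x _ <-]; rewrite lee_fin.
rewrite trig_field_Ze enorm3_Ze //.
apply: le_trans (ler_norm_sum _ _ _) _.
apply: ler_sum => i _; rewrite normrM.
by rewrite ler_piMl // cos_max.
Qed.

Lemma besov_Ze (R : realType) (alpha theta beta C0 : R) (j : nat)
  (k : nat -> vec3 R) (r : nat) :
  (j < 3)%N -> 
  (forall t, 0 < t -> t `^ (theta / (2 * alpha)) *
     \sum_(i <- iota 1 r) expR (- (t * enorm3 (k i) `^ (2 * alpha))) * enorm3 (k i) `^ theta
     <= C0) ->
  (besov_neg_norm alpha theta
     [seq ((r%:R `^ (- beta) * enorm3 (k i) `^ theta) *: evec R j, k i) | i <- iota 1 r]
   <= (C0 * r%:R `^ (- beta))%:E)%E.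
Proof.
move=> hj H; apply: ge_ereal_sup => _ [t t0 <-] /=.
rewrite frac_heat_Ze.
apply: (le_trans (lee_wpmul2l (x := (t `^ (theta / (2 * alpha)))%:E) _ (Linf_Ze _ _ _ hj))).
  by rewrite lee_fin powR_ge0.
rewrite -EFinM lee_fin.
have -> : \sum_(i <- iota 1 r) `|expR (- (t * enorm3 (k i) `^ (2 * alpha))) *
             (r%:R `^ (- beta) * enorm3 (k i) `^ theta)|
    = r%:R `^ (- beta) * \sum_(i <- iota 1 r)
        expR (- (t * enorm3 (k i) `^ (2 * alpha))) * enorm3 (k i) `^ theta.
  rewrite mulr_sumr; apply: eq_bigr => i _.
  have h : 0 <= expR (- (t * enorm3 (k i) `^ (2 * alpha))) *
    (r%:R `^ (- beta) * enorm3 (k i) `^ theta).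
    by rewrite mulr_ge0 ?powR_ge0 ?expR_ge0 ?mulr_ge0 ?powR_ge0.
  by rewrite (ger0_norm h); ring.
rewrite mulrCA (mulrC C0); apply: ler_wpM2l; [exact: powR_ge0 | exact: H].
Qed.

Lemma enorm3_kfreq' (R : realType) (a : R) :
  enorm3 (a *: evec R 0 + evec R 2) = Num.sqrt (a ^+ 2 + 1).
Proof.
rewrite /enorm3 !big_ord_recr big_ord0 /= !mxE /=; congr Num.sqrt.
ring.
Qed.

Theorem lemma4p2 (R : realType) (alpha beta1 beta2 theta1 theta2 : R) :
  0 < alpha -> 0 < beta1 -> 0 < beta2 -> 0 < theta1 -> 0 < theta2 ->
  exists C : R, 0 < C /\
    forall r K : nat, (1 <= r)%N -> (1 <= K)%N ->
      (besov_neg_norm alpha theta1 (u0 r K beta1 theta1)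
         <= (C * (r%:R) `^ (- beta1))%:E)%E /\
      (besov_neg_norm alpha theta2 (b0 r K beta2 theta2)
         <= (C * (r%:R) `^ (- beta2))%:E)%E.
Proof.
move=> a0 b10 b20 t10 t20.
have [C1 [C1p H1]] := sum_bound a0 t10.
have [C2 [C2p H2]] := sum_bound a0 t20.
exists (C1 + C2); split; first exact: addr_gt0.
move=> r K r1 K1.
set n := fun i => (2 ^ i.-1 * K)%:R : R.
have n1 : forall i, 1 <= n i.
  by move=> i; rewrite /n ler1n muln_gt0 expn_gt0 K1.
have n2 : forall i, (1 <= i)%N -> n i.+1 = 2 * n i.
  by case=> [//|j] _; rewrite /n /= expnS -mulnA natrM.
have m1 : forall i, enorm3 (kfreq R K i) = n i.
  by move=> i; rewrite /kfreq /zeta enorm3_Ze // ger0_norm // ler0n.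
have m2 : forall i, enorm3 (kfreq' R K i) = Num.sqrt (n i ^+ 2 + 1).
  by move=> i; rewrite /kfreq' /kfreq /zeta /eta_ enorm3_kfreq'.
split.
- apply: (le_trans (@besov_Ze R alpha theta1 beta1 C1 2 (kfreq R K) r _ _)) => //.
    move=> t t0; apply: (H1 (fun i => enorm3 (kfreq R K i))) => // i hi.
    rewrite !m1 n2 //; have := n1 i; split; [lra | nra].
  by rewrite lee_fin ler_wpM2r ?powR_ge0 // lerDl ltW.
- apply: (le_trans (@besov_Ze R alpha theta2 beta2 C2 1 (kfreq' R K) r _ _)) => //.
    move=> t t0; apply: (H2 (fun i => enorm3 (kfreq' R K i))) => // i hi.
    have := n1 i => ni.
    rewrite !m2 n2 // !sqr_sqrtr; last 2 first.
      - by rewrite addr_ge0 ?sqr_ge0.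
      - by rewrite addr_ge0 ?sqr_ge0.
    split; first by rewrite sqrtr_gt0; nra.
    nra.
  by rewrite lee_fin ler_wpM2r ?powR_ge0 // lerDr ltW.
Qed.
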